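(* There exists a one-pass streaming $2$-approximation algorithm for the unweighted cycle augmentation problem whose total memory is $O(n)$ edges.
   Context: Cycle augmentation problem: given a cycle $C$ on vertex set $V=\{0,1,\dots,n-1\}$ (edges $(i-1,i)$, indices mod $n$), which is known in advance, and a set of links $L\subseteq\binom{V}{2}$ that arrive one by one in an arbitrary order in a stream, find a minimum-cardinality (in the unweighted case) subset $S\subseteq L$ such that $(V,C\cup S)$ is $3$-edge-connected. A $2$-approximation outputs a feasible $S$ of size at most twice the optimum. *)

(* Defs.v *)
From mathcomp Require Import all_boot.
Set Implicit Arguments. Unset Strict Implicit. Unset Printing Implicit Defensive.

Definition link (n : nat) := ('I_n * 'I_n)%type.

Definition cycle_edges (n : nat) : seq (link n) :=
  [seq (i, ordS i) | i <- enum 'I_n].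

Definition crossing (n : nat) (X : {set 'I_n}) (E : seq (link n)) : nat :=
  count (fun e : link n => (e.1 \in X) != (e.2 \in X)) E.

Definition three_edge_connected (n : nat) (E : seq (link n)) : Prop :=
  forall X : {set 'I_n}, X != set0 -> X != setT -> 3 <= crossing X E.

Definition feasible (n : nat) (S : seq (link n)) : Prop :=
  three_edge_connected (cycle_edges n ++ S).

(* A set of links L ⊆ binom(V,2), given as a stream in arbitrary order:
   each unordered pair {u,v} is encoded as (u,v) with u < v, no repetitions. *)
Definition valid_links (n : nat) (L : seq (link n)) : bool :=
  uniq L && all (fun e : link n => (e.1 < e.2)%N) L.

(* A one-pass streaming algorithm for instances on n vertices (n and C are
   known in advance).  Its memory state is a list of stored edges (pairs of
   vertices, i.e. words of O(log n) bits); it reads each link of the stream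
   once, in order, updating the state, and finally produces its output from
   the state alone. *)
Record stream_alg (n : nat) := StreamAlg {
  sa_init : seq (link n);
  sa_step : seq (link n) -> link n -> seq (link n);
  sa_output : seq (link n) -> seq (link n)
}.

Definition run (n : nat) (A : stream_alg n) (L : seq (link n)) : seq (link n) :=
  sa_output A (foldl (sa_step A) (sa_init A) L).

(* Main.v *)
Require Import Defs.
From mathcomp Require Import all_boot zify.
Set Implicit Arguments. Unset Strict Implicit. Unset Printing Implicit Defensive.

Section Cut.
Variable n : nat.
Variable X : {set 'I_n}.

Definition fX (k : nat) : bool := [exists i : 'I_n, (val i == k) && (i \in X)].

Lemma fX_ord (i : 'I_n) : fX i = (i \in X).
Proof.
apply/existsP/idP => [[j /andP [/eqP/val_inj -> //]]|Hi]; by exists i; rewrite eqxx.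
Qed.

Lemma ivt (g : nat -> bool) p q : p <= q -> g p != g q ->
  exists i, [/\ p <= i, i < q & g i != g i.+1].
Proof.
elim: q => [|q IH] Hpq Hg.
  have Ep : p = 0 by lia.
  by rewrite Ep eqxx in Hg.
case: (ltnP p q.+1) => Hp; last first.
  have Ep : p = q.+1 by lia. by rewrite Ep eqxx in Hg.
case Hpq': (g p == g q).
  exists q; split; [lia | lia | by rewrite -(eqP Hpq')].
have [i [H1 H2 H3]] := IH (ltnSE Hp) (negbT Hpq').
exists i; split => //; lia.
Qed.

Definition cyc_cross := crossing X (cycle_edges n).

Lemma cyc_crossE : cyc_cross = count (fun i : 'I_n => (i \in X) != (ordS i \in X)) (enum 'I_n).
Proof. by rewrite /cyc_cross /crossing /cycle_edges count_map. Qed.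

Lemma count_ge (P : pred 'I_n) (s : seq 'I_n) : uniq s -> all P s -> size s <= count P (enum 'I_n).
Proof.
move=> Us /allP As; rewrite -size_filter; apply: uniq_leq_size => // x xs.
by rewrite mem_filter As // mem_enum.
Qed.

Lemma change_ord i (Hi : i.+1 < n) : fX i != fX i.+1 ->
  ((Ordinal (ltnW Hi)) \in X) != (ordS (Ordinal (ltnW Hi)) \in X).
Proof.
rewrite -!fX_ord /=. by rewrite modn_small.
Qed.

Lemma three_changes i1 i2 i3 : i1 < i2 -> i2 < i3 -> i3.+1 < n ->
  fX i1 != fX i1.+1 -> fX i2 != fX i2.+1 -> fX i3 != fX i3.+1 -> 3 <= cyc_cross.
Proof.
move=> H12 H23 H3 C1 C2 C3.
have H2 : i2.+1 < n by lia. have H1 : i1.+1 < n by lia.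
rewrite cyc_crossE.
apply: (@count_ge _ [:: Ordinal (ltnW H1); Ordinal (ltnW H2); Ordinal (ltnW H3)]).
  rewrite /= !inE -!val_eqE /= andbT; lia.
by rewrite /= (change_ord H1 C1) (change_ord H2 C2) (change_ord H3 C3).
Qed.

Hypothesis X0 : forall i : 'I_n, val i = 0 -> i \notin X.

Lemma f0 : fX 0 = false.
Proof. apply/existsP => [[i /andP [/eqP H]]]; by rewrite (negbTE (X0 H)). Qed.

Lemma two_changes : X != set0 -> 2 <= cyc_cross.
Proof.
case/set0Pn => p pX.
have fp : fX p by rewrite fX_ord.
have n0 : 0 < n by case: p {pX fp} => p' /= ; lia.
have p0 : 0 < val p by case: (posnP (val p)) => // /X0; rewrite pX.
have Cp : fX 0 != fX p by rewrite f0 fp.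
have [i1 [_ H1 C1]] := @ivt fX 0 p (leq0n _) Cp.
have Hm : n.-1 < n by lia.
case Efm : (fX n.-1).
-
  have Hi1 : i1.+1 < n by have := ltn_ord p; lia.
  rewrite cyc_crossE.
  apply: (@count_ge _ [:: Ordinal (ltnW Hi1); Ordinal Hm]).
    rewrite /= !inE -!val_eqE /= andbT; lia.
  rewrite /= (change_ord Hi1 C1) /= andbT -fX_ord /=.
  have -> : ordS (Ordinal Hm) \in X = false.
    apply/negbTE/X0 => /=. have -> : n.-1.+1 = n by lia. by rewrite modnn.
  by rewrite Efm.
- have Hpm : p <= n.-1 by have := ltn_ord p; lia.
  have Cm : fX p != fX n.-1 by rewrite fp Efm.
  have [i2 [H2a H2b C2]] := @ivt fX p n.-1 Hpm Cm.
  have Hi1 : i1.+1 < n by lia.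
  have Hi2 : i2.+1 < n by lia.
  rewrite cyc_crossE.
  apply: (@count_ge _ [:: Ordinal (ltnW Hi1); Ordinal (ltnW Hi2)]).
    rewrite /= !inE -!val_eqE /= andbT; lia.
  by rewrite /= (change_ord Hi1 C1) (change_ord Hi2 C2).
Qed.

Lemma arc_up (u w b2 : 'I_n) : u < w -> u \in X -> w \notin X -> w <= b2 ->
  cyc_cross <= 2 -> b2 \notin X.
Proof.
move=> uw uX wX wb cc; apply/negP => bX.
have fu : fX u by rewrite fX_ord.
have fw : fX w = false by rewrite fX_ord; apply/negbTE.
have fb : fX b2 by rewrite fX_ord.
have C1 : fX 0 != fX u by rewrite f0 fu.
have [i1 [_ H1 D1]] := @ivt fX 0 u (leq0n _) C1.
have C2 : fX u != fX w by rewrite fu fw.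
have [i2 [H2a H2b D2]] := @ivt fX u w (ltnW uw) C2.
have C3 : fX w != fX b2 by rewrite fb fw.
have [i3 [H3a H3b D3]] := @ivt fX w b2 wb C3.
have L12 : i1 < i2 by apply: leq_trans H1 H2a.
have L23 : i2 < i3 by apply: leq_trans H2b H3a.
have L3 : i3.+1 < n by apply: leq_trans (ltn_ord b2).
have := three_changes L12 L23 L3 D1 D2 D3.
by rewrite ltnNge cc.
Qed.

Lemma arc_down (b1 u w : 'I_n) : u < w -> u \notin X -> w \in X -> b1 <= u ->
  cyc_cross <= 2 -> b1 \notin X.
Proof.
move=> uw uX wX bu cc; apply/negP => bX.
have fu : fX u = false by rewrite fX_ord; apply/negbTE.
have fw : fX w by rewrite fX_ord.
have fb : fX b1 by rewrite fX_ord.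
have C1 : fX 0 != fX b1 by rewrite f0 fb.
have [i1 [_ H1 D1]] := @ivt fX 0 b1 (leq0n _) C1.
have C2 : fX b1 != fX u by rewrite fu fb.
have [i2 [H2a H2b D2]] := @ivt fX b1 u bu C2.
have C3 : fX u != fX w by rewrite fu fw.
have [i3 [H3a H3b D3]] := @ivt fX u w (ltnW uw) C3.
have L12 : i1 < i2 by apply: leq_trans H1 H2a.
have L23 : i2 < i3 by apply: leq_trans H2b H3a.
have L3 : i3.+1 < n by apply: leq_trans (ltn_ord w).
have := three_changes L12 L23 L3 D1 D2 D3.
by rewrite ltnNge cc.
Qed.

End Cut.

Definition dominated n (T : seq (link n)) (l : link n) : Prop :=
  (l.1 < l.2) /\ (exists b, [/\ b \in T, b.1 = l.1 & l.2 <= b.2]) /\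
  (exists b, [/\ b \in T, b.2 = l.2 & b.1 <= l.1]).

Lemma key0 n (X : {set 'I_n}) (S T : seq (link n)) :
  (forall i : 'I_n, val i = 0 -> i \notin X) ->
  (forall l, l \in S -> dominated T l) ->
  X != set0 -> 3 <= crossing X (cycle_edges n ++ S) -> 3 <= crossing X (cycle_edges n ++ T).
Proof.
move=> X0 HS Xn.
have c2 := two_changes X0 Xn.
rewrite /crossing !count_cat.
move: c2 (@arc_up _ X X0) (@arc_down _ X X0); rewrite /cyc_cross /crossing.
set c0 := count _ (cycle_edges n) => c2 arc_up arc_down.
case: (leqP 3 c0) => c3 H; first by apply: leq_trans c3 (leq_addr _ _).
have cc : c0 <= 2 by rewrite -ltnS.
have : 0 < count (fun e : link n => (e.1 \in X) != (e.2 \in X)) S.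
  rewrite lt0n; apply/eqP => E; move: H; rewrite E addn0 => H.
  by have := leq_trans H cc.
rewrite -has_count => /hasP [l lS lX].
have [lt [[b1 [b1T b1a b1b]] [b2 [b2T b2a b2b]]]] := HS l lS.
suff : 0 < count (fun e : link n => (e.1 \in X) != (e.2 \in X)) T.
  by move=> P; apply: (leq_add c2 P).
rewrite -has_count; apply/hasP.
case E1: (l.1 \in X); rewrite E1 in lX.
- exists b1 => //; rewrite b1a E1.
  have lX2 : l.2 \notin X by move: lX; case: (l.2 \in X).
  by rewrite (arc_up _ _ _ lt E1 lX2 b1b cc).
- exists b2 => //; rewrite b2a.
  have lX2 : l.2 \in X by move: lX; case: (l.2 \in X).
  by rewrite lX2 (negbTE (arc_down _ _ _ lt (negbT E1) lX2 b2b cc)).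
Qed.

Lemma crossingC n (X : {set 'I_n}) E : crossing (~: X) E = crossing X E.
Proof. apply: eq_count => e; rewrite !inE; by case: (e.1 \in X); case: (e.2 \in X). Qed.

Lemma key n (X : {set 'I_n}) (S T : seq (link n)) :
  (forall l, l \in S -> dominated T l) ->
  X != set0 -> X != setT -> 3 <= crossing X (cycle_edges n ++ S) -> 3 <= crossing X (cycle_edges n ++ T).
Proof.
move=> HS Xn XT.
case: (boolP [exists i : 'I_n, (val i == 0) && (i \in X)]) => [/existsP [i /andP [/eqP i0 iX]]|H0].
- move=> H; rewrite -crossingC; apply: (key0 _ HS); last by rewrite crossingC.
  + move=> j j0; rewrite inE negbK; by have -> : j = i by apply: val_inj; rewrite i0 j0.
  + apply/negP => /eqP H'; move: XT; by rewrite -(setCK X) H' setC0 eqxx.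
- apply: key0 HS Xn => i i0; apply/negP => iX; move/negP: H0; apply; apply/existsP; exists i; by rewrite i0 eqxx.
Qed.

Section Alg.
Variable n : nat.
Implicit Types (M s P T : seq (link n)) (l e b : link n).

Definition upo M (u : 'I_n) : option (link n) :=
  foldr (fun (e : link n) (acc : option (link n)) => if e.1 == u then
     (if acc is Some b then (if b.2 < e.2 then Some e else acc) else Some e) else acc) None M.
Definition downo M (w : 'I_n) : option (link n) :=
  foldr (fun (e : link n) (acc : option (link n)) => if e.2 == w then
     (if acc is Some b then (if e.1 < b.1 then Some e else acc) else Some e) else acc) None M.

Lemma upo_in M u b : upo M u = Some b -> b \in M /\ b.1 = u.
Proof.
elim: M => [//|e M IH] /=.
case: ifP => [/eqP eu|_]; last by move/IH => [? ?]; rewrite inE; split => //; apply/orP; right.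
case E: (upo M u) => [b'|]; last by case=> <-; rewrite inE eqxx.
case: ifP => _; first by case=> <-; rewrite inE eqxx.
by case=> Eb; have [? ?] := IH (etrans E (congr1 Some Eb)); rewrite inE; split => //; apply/orP; right.
Qed.

Lemma upo_max M l : l \in M -> exists b, upo M l.1 = Some b /\ l.2 <= b.2.
Proof.
elim: M => [//|e M IH]; rewrite inE => /orP [/eqP ->|lM] /=.
- rewrite eqxx; case: (upo M e.1) => [b'|]; last by exists e.
  case: ifP => H; first by exists e. by exists b'; split => //; rewrite leqNgt H.
- have [b [Eb Hb]] := IH lM; rewrite Eb.
  case: ifP => _; last by exists b.
  case: ifP => H; last by exists b.
  by exists e; split => //; apply: leq_trans Hb (ltnW H).
Qed.

Lemma downo_in M w b : downo M w = Some b -> b \in M /\ b.2 = w.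
Proof.
elim: M => [//|e M IH] /=.
case: ifP => [/eqP eu|_]; last by move/IH => [? ?]; rewrite inE; split => //; apply/orP; right.
case E: (downo M w) => [b'|]; last by case=> <-; rewrite inE eqxx.
case: ifP => _; first by case=> <-; rewrite inE eqxx.
by case=> Eb; have [? ?] := IH (etrans E (congr1 Some Eb)); rewrite inE; split => //; apply/orP; right.
Qed.

Lemma downo_min M l : l \in M -> exists b, downo M l.2 = Some b /\ b.1 <= l.1.
Proof.
elim: M => [//|e M IH]; rewrite inE => /orP [/eqP ->|lM] /=.
- rewrite eqxx; case: (downo M e.2) => [b'|]; last by exists e.
  case: ifP => H; first by exists e. by exists b'; split => //; rewrite leqNgt H.
- have [b [Eb Hb]] := IH lM; rewrite Eb.
  case: ifP => _; last by exists b.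
  case: ifP => H; last by exists b.
  by exists e; split => //; apply: leq_trans (ltnW H) Hb.
Qed.

Definition Hf M := pmap (upo M) (enum 'I_n) ++ pmap (downo M) (enum 'I_n).

Lemma Hf_in M b : b \in Hf M -> b \in M.
Proof.
rewrite mem_cat !mem_pmap => /orP [] /mapP [u _ E].
- by have [] := upo_in (esym E).
- by have [] := downo_in (esym E).
Qed.

Lemma Hf_up M u b : upo M u = Some b -> b \in Hf M.
Proof. by move=> E; rewrite mem_cat; apply/orP; left; rewrite mem_pmap -E; apply: map_f; rewrite mem_enum. Qed.
Lemma Hf_down M u b : downo M u = Some b -> b \in Hf M.
Proof. by move=> E; rewrite mem_cat; apply/orP; right; rewrite mem_pmap -E; apply: map_f; rewrite mem_enum. Qed.

Lemma size_Hf M : size (Hf M) <= 2 * n.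
Proof.
rewrite size_cat !size_pmap mul2n -addnn.
by apply: leq_add; rewrite -[X in _ <= X](size_enum_ord n) count_size.
Qed.

Definition Inv P s := {subset s <= P} /\ forall l, l \in P ->
  (exists h, [/\ h \in s, h.1 = l.1 & l.2 <= h.2]) /\ (exists h, [/\ h \in s, h.2 = l.2 & h.1 <= l.1]).

Definition stepf s e := Hf (e :: s).

Lemma Inv_step P s e : Inv P s -> Inv (e :: P) (stepf s e).
Proof.
move=> [sub dom]; split.
  move=> b /Hf_in; rewrite !inE => /orP [->//|/sub ->]; by rewrite orbT.
move=> l lP.
have [[h [hs h1 h2]] [h' [hs' h1' h2']]] : (exists h, [/\ h \in e :: s, h.1 = l.1 & l.2 <= h.2]) /\
   (exists h, [/\ h \in e :: s, h.2 = l.2 & h.1 <= l.1]).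
  move: lP; rewrite inE => /orP [/eqP ->|/dom [[h [? ? ?]] [h' [? ? ?]]]].
  - by split; exists e; rewrite inE eqxx.
  - by split; [exists h | exists h']; rewrite inE; split => //; apply/orP; right.
split.
- have [b [Eb Hb]] := upo_max hs.
  have [_ b1] := upo_in Eb.
  exists b; split; first exact: Hf_up Eb. by rewrite b1 h1. by apply: leq_trans h2 Hb.
- have [b [Eb Hb]] := downo_min hs'.
  have [_ b1] := downo_in Eb.
  exists b; split; first exact: Hf_down Eb. by rewrite b1 h1'. by apply: leq_trans Hb h2'.
Qed.

Lemma Inv_eq P1 P2 s : P1 =i P2 -> Inv P1 s -> Inv P2 s.
Proof.
move=> E [sub dom]; split; first by move=> x /sub; rewrite E.
by move=> l; rewrite -E => /dom.
Qed.

Lemma Inv_fold L s P : Inv P s -> Inv (P ++ L) (foldl stepf s L).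
Proof.
elim: L s P => [|e L IH] s P /=; first by rewrite cats0.
move=> I; apply: Inv_eq (IH _ _ (Inv_step e I)).
move=> x; rewrite !mem_cat !inE; by case: (x == e); case: (x \in P); case: (x \in L).
Qed.

Fixpoint allmasks k : seq bitseq :=
  if k is k'.+1 then [seq bb :: m | bb <- [:: true; false], m <- allmasks k'] else [:: [::]].

Lemma mem_allmasks m : m \in allmasks (size m).
Proof.
elim: m => [|bb m IH] /=; first by rewrite inE.
rewrite cats0 mem_cat; case: bb; apply/orP; [left|right]; by rewrite mem_map // => x y [].
Qed.

Definition cands T := [seq mask m T | m <- allmasks (size T)].

Lemma cands_sub T T' : subseq T' T -> T' \in cands T.
Proof. by case/subseqP => m Em ->; apply/mapP; exists m => //; rewrite -Em mem_allmasks. Qed.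

Lemma sub_cands T T' : T' \in cands T -> subseq T' T.
Proof. by case/mapP => m _ ->; apply: mask_subseq. Qed.

Definition feasibleb S := [forall X : {set 'I_n},
  (X != set0) ==> (X != setT) ==> (3 <= crossing X (cycle_edges n ++ S))].

Lemma feasibleP S : reflect (feasible S) (feasibleb S).
Proof.
apply: (iffP forallP) => H X; first by move=> X0 XT; have := H X; rewrite X0 XT.
by apply/implyP => X0; apply/implyP => XT; apply: H.
Qed.

Definition pick2 (T b : seq (link n)) := if size T < size b then T else b.

Definition pickmin (cs : seq (seq (link n))) :=
  if cs is c :: cs' then foldr pick2 c cs' else [::].

Lemma foldr_pick c cs : foldr pick2 c cs \in c :: cs /\ forall T, T \in c :: cs -> size (foldr pick2 c cs) <= size T.
Proof.
elim: cs => [|d cs [IH1 IH2]] /=; first by split; [rewrite inE | move=> T; rewrite inE => /eqP ->].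
rewrite /pick2; case: ifP => H.
- split; first by rewrite !inE eqxx orbT.
  move=> T; rewrite !inE => /orP [/eqP ->|/orP [/eqP ->//|TT]].
    by apply: ltnW; apply: leq_trans H (IH2 _ _); rewrite inE eqxx.
  by apply: ltnW; apply: leq_trans H (IH2 _ _); rewrite inE TT orbT.
- split.
    by move: IH1; rewrite !inE => /orP [->|->]; rewrite ?orbT.
  move=> T; rewrite !inE => /orP [/eqP ->|/orP [/eqP ->|TT]].
  + by apply: IH2; rewrite inE eqxx.
  + by rewrite leqNgt H.
  + by apply: IH2; rewrite inE TT orbT.
Qed.

Lemma pickmin_in cs : cs != [::] -> pickmin cs \in cs.
Proof. by case: cs => [//|c cs] _; case: (foldr_pick c cs). Qed.

Lemma pickmin_le cs T : T \in cs -> size (pickmin cs) <= size T.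
Proof. by case: cs => [//|c cs] /=; case: (foldr_pick c cs) => _ H /H. Qed.

Definition outf s := pickmin [seq T <- cands (undup s) | feasibleb T].

End Alg.

Definition Alg n : stream_alg n := StreamAlg [::] (@stepf n) (@outf n).

Definition Rl n (H : seq (link n)) (l : link n) : seq (link n) :=
  oapp (fun b => [:: b]) [::] (upo H l.1) ++ oapp (fun b => [:: b]) [::] (downo H l.2).

Definition RS n (H S : seq (link n)) := flatten [seq Rl H l | l <- S].

Lemma size_RS n (H S : seq (link n)) : size (RS H S) <= 2 * size S.
Proof.
elim: S => [//|l S IH]; rewrite /RS /= size_cat -/(RS H S) mulnS.
apply: leq_add => //; rewrite /Rl size_cat.
by case: (upo H l.1); case: (downo H l.2).
Qed.

Lemma good n (L H S : seq (link n)) :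
  all (fun e : link n => (e.1 < e.2)%N) L -> uniq H ->
  (forall l, l \in L -> (exists h, [/\ h \in H, h.1 = l.1 & l.2 <= h.2]) /\
                        (exists h, [/\ h \in H, h.2 = l.2 & h.1 <= l.1])) ->
  {subset S <= L} -> feasible S ->
  let T := [seq h <- H | h \in RS H S] in
  T \in [seq T <- cands H | feasibleb T] /\ size T <= 2 * size S.
Proof.
move=> VL UH dom sub FS T.
split; last first.
  apply: leq_trans (size_RS H S).
  apply: uniq_leq_size; first exact: filter_uniq.
  by move=> x; rewrite mem_filter => /andP [].
rewrite mem_filter cands_sub ?filter_subseq // andbT.
apply/feasibleP => X X0 XT; apply: key (FS X X0 XT) => // l lS.
have lL := sub l lS.
split; first by move/allP: VL => /(_ l lL).
have [[h [hH h1 h2]] [h' [hH' h1' h2']]] := dom l lL.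
split.
- have [b [Eb Hb]] := upo_max hH.
  have [bH b1] := upo_in Eb.
  exists b; split; last by apply: leq_trans h2 Hb. 2: by rewrite b1 h1.
  rewrite mem_filter bH andbT; apply/flatten_mapP; exists l => //.
  by rewrite /Rl -h1 Eb mem_cat inE eqxx.
- have [b [Eb Hb]] := downo_min hH'.
  have [bH b1] := downo_in Eb.
  exists b; split; last by apply: leq_trans Hb h2'. 2: by rewrite b1 h1'.
  rewrite mem_filter bH andbT; apply/flatten_mapP; exists l => //.
  by rewrite /Rl -h1' Eb mem_cat inE eqxx orbT.
Qed.

Theorem mainTheorem2 :
  exists (A : forall n : nat, stream_alg n) (c : nat),
    (* total memory O(n) edges *)
    (forall n : nat, 3 <= n ->
       size (sa_init (A n)) <= c * n /\
       (forall (s : seq (link n)) (e : link n), size (sa_step (A n) s e) <= c * n)) /\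
    (* 2-approximation on every feasible instance, for every stream order *)
    (forall (n : nat) (L : seq (link n)), 3 <= n -> valid_links L -> feasible L ->
       let S := run (A n) L in
       [/\ uniq S, {subset S <= L}, feasible S &
           forall S' : seq (link n), uniq S' -> {subset S' <= L} -> feasible S' ->
             size S <= 2 * size S']).
Proof.
exists Alg, 2; split.
  move=> n _; split => //= s e; exact: size_Hf.
move=> n L n3 /andP [UL VL] FL.
rewrite /run /= /outf.
set st := foldl _ _ L.
have [sub dom] : Inv L st.
  have := @Inv_fold n L [::] [::]; rewrite cat0s; apply; by split.
have dom' : forall l, l \in L -> (exists h, [/\ h \in undup st, h.1 = l.1 & l.2 <= h.2]) /\
                        (exists h, [/\ h \in undup st, h.2 = l.2 & h.1 <= l.1]).
  move=> l /dom [[h [? ? ?]] [h' [? ? ?]]].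
  by split; [exists h | exists h']; rewrite mem_undup.
have GL := good VL (undup_uniq st) dom' (fun x (h : x \in L) => h) FL.
set cs := [seq T <- cands (undup st) | feasibleb T].
have csn : cs != [::] by case: GL => GL _; apply/eqP => E; rewrite -/cs E in GL.
have Scs := pickmin_in csn.
move: Scs; rewrite mem_filter => /andP [FS /sub_cands SH].
split.
- exact: subseq_uniq SH (undup_uniq st).
- by move=> x /(mem_subseq SH); rewrite mem_undup => /sub.
- exact/feasibleP.
- move=> S' _ sub' FS'.
  have [TS sT] := good VL (undup_uniq st) dom' sub' FS'.
  by apply: leq_trans (pickmin_le TS) sT.
Qed.
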